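(* For every positive integer $n$, $$\Psi_{\mathbb{Z}_n}(x)=\sum_{d\mid n}\mu\!\left(\frac nd\right)\left((1+x^2)^{\lfloor\frac{d-1}{2}\rfloor}(1+x)^{\frac{1+(-1)^d}{2}}-1\right),$$ and hence $$\mathcal{E}(\mathbb{Z}_n)=\Psi_{\mathbb{Z}_n}(1)=\sum_{d\mid n}\mu\!\left(\frac nd\right)\left(2^{\lfloor d/2\rfloor}-1\right),$$ where $\mu$ is the number-theoretic Möbius function.
   Context: For a finite group $\mathcal{A}$ with identity $e$, let $G(\mathcal{A})=\{\Omega\subseteq\mathcal{A}:\Omega^{-1}=\Omega,\ \langle\Omega\rangle=\mathcal{A},\ e\notin\Omega\}$. For $k\ge1$ let $a_k(\mathcal{A})$ be the number of orbits of the inner automorphism group $\mathrm{Inn}(\mathcal{A})$ (acting by $\alpha\cdot\Omega=\alpha(\Omega)$) on $\{\Omega\in G(\mathcal{A}):|\Omega|=k\}$; $\Psi_{\mathcal{A}}(x)=\sum_{k=1}^{|\mathcal{A}|-1}a_k(\mathcal{A})x^k$ and $\mathcal{E}(\mathcal{A})=\Psi_{\mathcal{A}}(1)$. For the cyclic (abelian) group $\mathbb{Z}_n$, $\mathrm{Inn}$ is trivial, so $a_k(\mathbb{Z}_n)$ is the number of inverse-closed generating subsets of $\mathbb{Z}_n\setminus\{0\}$ of size $k$. *)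

(* Defs.v *)
From HB Require Import structures.
From mathcomp Require Import all_boot all_order all_algebra all_fingroup.
Set Implicit Arguments. Unset Strict Implicit. Unset Printing Implicit Defensive.
Import GRing.Theory Num.Theory.

Definition Gsets (gT : finGroupType) : {set {set gT}} :=
  [set Om : {set gT} | [&& (Om^-1)%g == Om, <<Om>>%g == [set: gT] & (1%g \notin Om)]].

(* a_k(A): number of orbits of Inn(A) (i.e. of conjugation by elements of A,
   acting on subsets via 'Js) on the members of G(A) of size k *)
Definition a_k (gT : finGroupType) (k : nat) : nat :=
  #|[set orbit 'Js [set: gT] Om | Om in [set Om in Gsets gT | #|Om| == k]]|.

Definition Psi (gT : finGroupType) : {poly int} :=
  (\sum_(1 <= k < #|gT|) (a_k gT k)%:R *: 'X^k)%R.

Definition Eval (gT : finGroupType) : int := (Psi gT).[1]%R.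

Definition mobius (n : nat) : int :=
  if all (fun p => logn p n == 1%N) (primes n) then ((-1) ^+ size (primes n))%R else 0%R.

(* Main.v *)
Require Import Defs.
From HB Require Import structures.
From mathcomp Require Import all_boot all_order all_algebra all_fingroup.
From mathcomp Require Import zify.
Import GRing.Theory Num.Theory.

Lemma prod_if_all (s : seq nat) (P : pred nat) :
  (\prod_(p <- s) (if P p then -1 else 0 : int))%R = if all P s then ((-1) ^+ size s)%R else 0%R.
Proof.
elim: s => [|a s IH]; first by rewrite big_nil.
rewrite big_cons IH /=; case: (P a); case: (all P s) => //=; rewrite ?mulr0 ?mul0r //.
by rewrite exprS.
Qed.

Lemma mobiusE e : mobius e = (\prod_(p <- primes e) (if logn p e == 1%N then -1 else 0))%R.
Proof. by rewrite prod_if_all /mobius. Qed.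

Lemma mobius_pM p e : prime p -> (0 < e)%N -> ~~ (p %| e)%N -> mobius (p * e) = (- mobius e)%R.
Proof.
move=> pp e0 npe.
have p0 : (0 < p)%N by apply: prime_gt0.
have pe : perm_eq (primes (p * e)) (p :: primes e).
  apply: uniq_perm; rewrite ?primes_uniq //=.
    by rewrite primes_uniq andbT mem_primes pp e0 npe.
  by move=> q; rewrite primesM // in_cons primes_prime // inE.
have le0 : logn p e = 0%N.
  by apply/eqP; rewrite -leqn0 leqNgt logn_gt0 mem_primes pp e0 npe.
rewrite !mobiusE (perm_big _ pe) big_cons lognM // logn_prime // eqxx le0 /= mulN1r.
congr (GRing.opp _).
apply: eq_big_seq => q; rewrite mem_primes => /and3P[qp _ qe].
have qnp : q != p by apply: contraNneq npe => <-.
by rewrite lognM // logn_prime // (negPf qnp).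
Qed.

Lemma mobius_pM0 p e : prime p -> (0 < e)%N -> (p %| e)%N -> mobius (p * e) = 0%R.
Proof.
move=> pp e0 pe.
have p0 : (0 < p)%N by apply: prime_gt0.
rewrite /mobius; case: allP => // /(_ p); rewrite mem_primes pp muln_gt0 p0 e0 dvdn_mulr //.
rewrite lognM // logn_prime // eqxx.
have : (0 < logn p e)%N by rewrite logn_gt0 mem_primes pp e0.
by move=> h /(_ isT) /eqP; lia.
Qed.

Lemma mobius1 : mobius 1 = 1%R.
Proof. by []. Qed.

Lemma mobius_sum g : (0 < g)%N ->
  (\sum_(e <- divisors g) mobius e = (g == 1%N)%:R)%R.
Proof.
move=> g0; have [->|g1] := eqVneq g 1%N; first by rewrite /= big_seq1 mobius1.
have g1' : (1 < g)%N by rewrite ltn_neqAle eq_sym g1 g0.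
set p := pdiv g.
have pp : prime p by apply: pdiv_prime.
have p0 : (0 < p)%N by apply: prime_gt0.
have pg : (p %| g)%N by apply: pdiv_dvd.
set h := (g %/ p)%N.
have gE : g = (p * h)%N by rewrite /h mulnC divnK.
have h0 : (0 < h)%N by move: g0; rewrite gE muln_gt0 => /andP[].
rewrite (bigID (fun e => p %| e)%N) /=.
have B : (\sum_(e <- divisors g | ~~ (p %| e)%N) mobius e =
         \sum_(e <- divisors h | ~~ (p %| e)%N) mobius e)%R.
  rewrite -[LHS]big_filter -[RHS]big_filter; apply: perm_big; apply: uniq_perm;
    rewrite ?filter_uniq ?divisors_uniq // => e.
  rewrite !mem_filter -!dvdn_divisors //; case pe: (p %| e)%N => //=.
  rewrite gE Gauss_dvdr // coprime_sym prime_coprime //; by rewrite pe.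
have A : (\sum_(e <- divisors g | (p %| e)%N) mobius e =
         \sum_(e <- divisors h) mobius (p * e))%R.
  rewrite -[LHS]big_filter -[RHS](big_map (muln p) xpredT); apply: perm_big; apply: uniq_perm.
  - by rewrite filter_uniq ?divisors_uniq.
  - by rewrite map_inj_uniq ?divisors_uniq // => x y /eqP; rewrite eqn_pmul2l // => /eqP.
  move=> e; rewrite mem_filter -dvdn_divisors //; apply/andP/mapP.
    move=> [/dvdnP[k ->] keg]; exists k; last by rewrite mulnC.
    by rewrite -dvdn_divisors // -(dvdn_pmul2l p0) -gE mulnC.
  move=> [k]; rewrite -dvdn_divisors // => kh ->; rewrite dvdn_mulr //.
  by rewrite gE dvdn_pmul2l.
rewrite A B (bigID (fun e => p %| e)%N) /=.
rewrite big1_seq ?add0r; last first.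
  move=> e /andP[pe]; rewrite -dvdn_divisors // => eh.
  by apply: mobius_pM0 => //; apply: dvdn_gt0 eh.
rewrite -big_split /= big1_seq //.
move=> e /andP[pe]; rewrite -dvdn_divisors // => eh.
by rewrite mobius_pM // ?addNr //; apply: dvdn_gt0 eh.
Qed.

Section G.
Variable m : nat.
Local Notation N := m.+1.
Local Open Scope group_scope.

Lemma valM (x y : 'I_N) : val (x * y) = ((x + y) %% N)%N.
Proof. by []. Qed.
Lemma valV (x : 'I_N) : val (x^-1) = ((N - x) %% N)%N.
Proof. by []. Qed.
Lemma val1 : val (1 : 'I_N) = 0%N.
Proof. by []. Qed.

Lemma inZpD a b : inZp (a + b) = (inZp a * inZp b) :> 'I_N.
Proof. by apply: val_inj; rewrite valM /= modnDm. Qed.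

Lemma inZpX a q : inZp (a * q) = (inZp a) ^+ q :> 'I_N.
Proof. by apply: val_inj; rewrite Zp_expg /= modnMml. Qed.

Lemma inZpN : inZp N = 1 :> 'I_N.
Proof. by apply: val_inj; rewrite /= modnn. Qed.

Lemma gcd_closed (K : {group 'I_N}) a b :
  inZp a \in K -> inZp b \in K -> inZp (gcdn a b) \in K.
Proof.
elim/ltn_ind: a b => a IH b Ha Hb.
have [->|a0] := eqVneq a 0%N; first by rewrite gcd0n.
rewrite gcdnC -gcdn_modl; apply: IH => //; first by rewrite ltn_mod lt0n.
have E : inZp b = inZp (b %/ a * a) * inZp (b %% a) :> 'I_N by rewrite -inZpD -divn_eq.
have -> : inZp (b %% a) = (inZp (b %/ a * a))^-1 * inZp b :> 'I_N by rewrite E mulKg.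
by rewrite groupM // groupV mulnC inZpX groupX.
Qed.

Definition gcdS (Om : {set 'I_N}) : nat := gcdn N (\big[gcdn/0]_(x in Om) (x : nat)).

Lemma gen_gcd (Om : {set 'I_N}) : (<<Om>> == [set: 'I_N]) = (gcdS Om == 1%N).
Proof.
apply/idP/idP => [/eqP genT | /eqP g1].
  set g := gcdS Om.
  have gN : (g %| N)%N by apply: dvdn_gcdl.
  have Hg : group_set [set x : 'I_N | (g %| x)%N].
    apply/group_setP; split; first by rewrite inE val1 dvdn0.
    move=> x y; rewrite !inE valM => gx gy.
    by rewrite /dvdn (modn_dvdm _ gN) -[_ == 0%N]/(g %| x + y)%N dvdn_addr.
  have : Om \subset Group Hg.
    apply/subsetP => x xO; rewrite inE; apply: dvdn_trans (dvdn_gcdr _ _) _.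
    exact: (biggcdn_inf x).
  rewrite -gen_subG genT => /subsetP /(_ (inZp 1) (in_setT _)); rewrite inE /=.
  have [m0|mpos] := posnP m; first by move=> _; rewrite -dvdn1; move: gN; rewrite m0.
  by rewrite modn_small ?dvdn1 // ltnS.
have K1 : inZp (gcdS Om) \in <<Om>>.
  apply: gcd_closed; first by rewrite inZpN group1.
  apply: (big_ind (fun k => inZp k \in <<Om>>)).
  - by have -> : inZp 0 = 1 :> 'I_N by apply: val_inj; rewrite /= mod0n.
  - by move=> a b; apply: gcd_closed.
  - by move=> x xO; rewrite valZpK; apply: mem_gen.
rewrite eqEsubset subsetT /=; apply/subsetP => x _.
by rewrite -(Zp1_expgz x) groupX // /Zp1 -g1.
Qed.

End G.

Lemma h1 (d e k : nat) : 0 < e -> 0 < k -> 2 * (k * e) < d * e -> k.-1 < (d.-1)./2.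
Proof. move=> e0 k0 h. have : 2 * k < d by nia. have := odd_double_half d.-1. case: (odd d.-1) => /=; lia. Qed.
Lemma h2 (d e j : nat) : 0 < e -> j < (d.-1)./2 -> 2 * (e * j.+1) < d * e.
Proof. move=> e0 h. suff : 2 * j.+1 < d by nia. have := odd_double_half d.-1. case: (odd d.-1) => /=; lia. Qed.
Lemma h3 (d e k : nat) : 0 < e -> 2 * (k * e) = d * e -> ~~ odd d.
Proof. move=> e0 h. have -> : d = k.*2 by rewrite -muln2; nia. by rewrite odd_double. Qed.
Lemma h4 (d e : nat) : 0 < e -> ~~ odd d -> 2 * (e * d./2) = d * e.
Proof. move=> e0 h. have := odd_double_half d. move: h; case: (odd d) => //= _ h. nia. Qed.

Section C.
Variable m : nat.
Local Notation N := m.+1.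
Local Open Scope group_scope.

Lemma valVpos (x : 'I_N) : (0 < x)%N -> val (x^-1) = (N - x)%N.
Proof. move=> x0; rewrite valV modn_small //; have := ltn_ord x; lia. Qed.

Variable e : nat.
Hypothesis eN : (e %| N)%N.

Definition Me : {set 'I_N} := [set x : 'I_N | (e %| x)%N].
Definition T : {set 'I_N} := [set t : 'I_N | [&& (e %| t)%N, (0 < t)%N & (2 * t <= N)%N]].

Lemma MeV x : x \in Me -> x^-1 \in Me.
Proof.
rewrite !inE valV => ex.
have [x0|xp] := posnP x; first by rewrite x0 subn0 modnn dvdn0.
by rewrite modn_small ?dvdn_sub //; have := ltn_ord x; lia.
Qed.

Lemma TMe : T \subset Me.
Proof. by apply/subsetP => x; rewrite !inE => /andP[]. Qed.

Lemma TV x : x \in T -> x^-1 \in T -> x^-1 = x.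
Proof.
rewrite !inE => /and3P[_ x0 x2]; rewrite valVpos // => /and3P[_ _ y2].
by apply: val_inj; rewrite valVpos //=; lia.
Qed.

Lemma notT x : x \in Me -> x != 1 -> x \notin T -> x^-1 \in T.
Proof.
rewrite !inE => ex x1; have x0 : (0 < x)%N.
  by rewrite lt0n; apply: contra x1 => /eqP x0; apply/eqP/val_inj.
rewrite ex x0 /= -ltnNge => x2.
have := MeV x; rewrite !inE => /(_ ex) ->; rewrite modn_small; last by have := ltn_ord x; lia.
have := ltn_ord x; lia.
Qed.

Lemma T1 : 1 \notin T.
Proof. by rewrite inE /= andbF. Qed.

Definition Pc (Om : {set 'I_N}) := [&& Om^-1 == Om, 1 \notin Om & Om \subset Me].

Lemma reindex_step (F : nat -> {poly int}) :
  (\sum_(Om : {set 'I_N} | Pc Om) F #|Om| = \sum_(U : {set 'I_N} | U \subset T) F #|(U :|: U^-1)%g|)%R.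
Proof.
rewrite (reindex_onto (fun U => U :|: U^-1) (fun Om => Om :&: T)).
  apply: eq_bigl => U; apply/idP/idP.
    by move=> /andP[_ /eqP <-]; apply: subsetIr.
  move=> UT; apply/andP; split.
    apply/and3P; split.
    - by rewrite invUg invgK setUC.
    - rewrite !inE negb_or; apply/andP; split; first by apply: contra T1; apply: (subsetP UT).
      by rewrite invg1; apply: contra T1; apply: (subsetP UT).
    - rewrite subUset (subset_trans UT TMe) /=; apply/subsetP => x; rewrite inE => xU.
      by rewrite -(invgK x); apply: MeV; apply: (subsetP TMe); apply: (subsetP UT).
  apply/eqP/setP => x; rewrite in_setI in_setU mem_invg; apply/idP/idP; last by move=> xU; rewrite xU (subsetP UT).
  move=> /andP[/orP[//|xU] xT].
  have yT : x^-1 \in T by apply: (subsetP UT).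
  by rewrite -(TV _ xT yT).
move=> Om /and3P[/eqP OV O1 OM]; apply/setP => x; rewrite in_setU !in_setI mem_invg in_setI.
apply/idP/idP.
  by case/orP => /andP[h _] //; rewrite -OV mem_invg.
move=> xO; case xT: (x \in T); first by rewrite xO.
have x1 : x != 1 by apply: contraNneq O1 => <-.
have yT := notT _ (subsetP OM x xO) x1 (negbT xT).
by rewrite yT -mem_invg OV xO orbT.
Qed.


Definition w (t : 'I_N) : nat := if (2 * t == N)%N then 1%N else 2%N.

Lemma card_hU (U : {set 'I_N}) : U \subset T -> #|U :|: U^-1| = (\sum_(t in U) w t)%N.
Proof.
move=> UT.
have I : U :&: U^-1 = [set t in U | (2 * t == N)%N].
  apply/setP => t; rewrite in_setI mem_invg inE; case tU: (t \in U) => //=.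
  have tT := subsetP UT t tU; move: (tT); rewrite inE => /and3P[_ t0 _].
  apply/idP/idP => [yU | /eqP t2].
    move: (congr1 val (TV _ tT (subsetP UT _ yU))); rewrite valVpos // => /= h.
    by apply/eqP; lia.
  suff -> : t^-1 = t by [].
  by apply: val_inj; rewrite valVpos //=; lia.
have C : #|[set t in U | (2 * t == N)%N]| = (\sum_(t in U) (2 * t == N)%N)%N.
  rewrite -sum1_card (eq_bigl (fun t => (t \in U) && (2 * t == N)%N)); last by move=> t; rewrite inE.
  by rewrite big_mkcondr /=; apply: eq_bigr => t _; case: ifP.
have S : (\sum_(t in U) w t + \sum_(t in U) (2 * t == N)%N = #|U| + #|U|)%N.
  rewrite -big_split /= (eq_bigr (fun _ => 2%N)); last by move=> t _; rewrite /w; case: ifP.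
  by rewrite sum_nat_const muln2 -addnn.
have := cardsUI U U^-1; rewrite card_invg I C -S => /eqP; rewrite eqn_add2r => /eqP.
done.
Qed.

Local Close Scope group_scope.
Local Open Scope ring_scope.

Lemma sum_subsets (W : 'I_N -> nat) :
  (\sum_(U : {set 'I_N} | U \subset T) 'X^(\sum_(t in U) W t) =
   \prod_(t in T) (1 + 'X^(W t)) :> {poly int})%R.
Proof.
pose F t : {poly int} := if t \in T then 'X^(W t) else 0.
have E := @bigA_distr _ 0 1 *%R +%R _ F (fun _ => 1).
rewrite (bigID (fun J : {set 'I_N} => J \subset T)) /= [X in _ + X]big1 ?addr0 in E; last first.
  move=> J /subsetPn[t tJ tT]; rewrite (bigD1 t) //= tJ /F (negPf tT) mul0r //.
rewrite [RHS]big_mkcond /= (eq_bigr (fun t => F t + 1)); last first.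
  by move=> t _; rewrite /F; case: ifP => _; rewrite ?add0r // addrC.
rewrite E; apply: eq_big => [J|J JT] //.
rewrite (big_morph (fun k => 'X^k) (fun a b => exprD _ a b) (expr0 _)) [LHS]big_mkcond.
apply: eq_bigr => t _; rewrite /F; case: ifP => // tJ; by rewrite (subsetP JT).
Qed.

Local Close Scope ring_scope.
Definition dd := (N %/ e)%N.
Lemma NE : N = (dd * e)%N. Proof. by rewrite /dd divnK. Qed.
Lemma e0 : (0 < e)%N. Proof. exact: dvdn_gt0 eN. Qed.

Lemma card_T2 : #|[set t in T | (2 * t != N)%N]| = (dd.-1)./2.
Proof.
have -> : [set t in T | (2 * t != N)%N] =
          [set inZp (e * j.+1)%N | j : 'I_((dd.-1)./2)].
  apply/setP => x; rewrite !inE; apply/idP/imsetP.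
    move=> /andP[/and3P[/dvdnP[k xk] x0 x2] xn].
    have k0 : (0 < k)%N by move: x0; rewrite xk muln_gt0 => /andP[].
    have x2' : (2 * (k * e) < dd * e)%N by rewrite -xk -NE ltn_neqAle xn.
    exists (Ordinal (h1 _ _ _ e0 k0 x2')) => //; apply: val_inj => /=.
    rewrite prednK // mulnC -xk modn_small //.
  move=> [j _ ->] /=; have := h2 _ _ _ e0 (ltn_ord j); rewrite -NE => hj.
  rewrite modn_small; last by lia.
  by rewrite dvdn_mulr //= muln_gt0 e0 /= ltnW //= ltn_eqF.
rewrite card_imset ?card_ord // => i j /(congr1 val) /=.
have := h2 _ _ _ e0 (ltn_ord i); have := h2 _ _ _ e0 (ltn_ord j); rewrite -NE => hj hi.
rewrite !modn_small; try lia. move=> /eqP; rewrite eqn_pmul2l ?e0 // => /eqP [?].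
by apply: val_inj.
Qed.

Lemma card_T1 : #|[set t in T | (2 * t == N)%N]| = ~~ odd dd.
Proof.
case: (boolP (odd dd)) => od /=.
  apply/eqP; rewrite cards_eq0; apply/eqP/setP => x; rewrite !inE.
  apply/negP => /andP[/and3P[/dvdnP[k xk] _ _] /eqP x2].
  by move: x2; rewrite xk NE => /(h3 _ _ _ e0); rewrite od.
have -> : [set t in T | (2 * t == N)%N] = [set inZp (e * dd./2)%N].
  have hd := h4 _ _ e0 od; rewrite -NE in hd.
  apply/setP => x; rewrite !inE; apply/idP/idP.
    move=> /andP[_ /eqP x2]; apply/eqP/val_inj => /=; rewrite modn_small; lia.
  move=> /eqP -> /=; rewrite modn_small; last by lia.
  rewrite dvdn_mulr //= hd eqxx andbT /= leqnn andbT muln_gt0 e0 /=.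
  have := NE; case: (dd./2) hd => //; lia.
by rewrite cards1.
Qed.

Local Open Scope ring_scope.
Lemma count_closed :
  \sum_(Om : {set 'I_N} | Pc Om) 'X^#|Om| =
  (1 + 'X ^+ 2) ^+ (dd.-1)./2 * (1 + 'X) ^+ (~~ odd dd) :> {poly int}.
Proof.
rewrite (reindex_step (fun k => 'X^k)).
under eq_bigr => U UT do rewrite card_hU //.
rewrite sum_subsets (bigID (fun t : 'I_N => (2 * t == N)%N)) /= mulrC.
congr (_ * _).
  rewrite -card_T2 -prodr_const; apply: eq_big => t; first by rewrite inE.
  by move=> /andP[_ /negPf h]; rewrite /w h.
rewrite -card_T1 -prodr_const; apply: eq_big => t; first by rewrite inE.
by move=> /andP[_ h]; rewrite /w h.
Qed.

End C.

Lemma gen_mob m (Om : {set 'I_m.+1}) :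
  ((gcdS m Om == 1%N)%:R : int)%R =
  (\sum_(e <- divisors m.+1) mobius e * (Om \subset Me m e)%:R)%R.
Proof.
have g0 : (0 < gcdS m Om)%N by rewrite /gcdS gcdn_gt0.
have gN : (gcdS m Om %| m.+1)%N by apply: dvdn_gcdl.
rewrite -mobius_sum //.
rewrite [RHS](eq_bigr (fun e => if Om \subset Me m e then mobius e else 0%R)); last first.
  by move=> e _; case: ifP => _; rewrite ?mulr1 ?mulr0.
rewrite -[RHS]big_mkcond -[RHS]big_filter; apply: perm_big.
have -> : [seq e <- divisors m.+1 | Om \subset Me m e] =
          [seq e <- divisors m.+1 | (e %| gcdS m Om)%N].
  apply: eq_in_filter => e; rewrite -dvdn_divisors // => eN.
  rewrite /gcdS dvdn_gcd eN /=; apply/subsetP/dvdn_biggcdP => h x xO.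
    by have := h x xO; rewrite inE.
  by rewrite inE; apply: h.
apply: uniq_perm; rewrite ?filter_uniq ?divisors_uniq // => e.
rewrite mem_filter -!dvdn_divisors //; apply/idP/andP => [h|[]//]; split => //.
exact: dvdn_trans h gN.
Qed.

Lemma conj_triv m (Om : {set 'I_m.+1}) y : (Om :^ y)%g = Om.
Proof.
apply/setP => x; rewrite mem_conjg; congr (_ \in Om).
by rewrite conjgE invgK (Zp_mulgC x) mulgA mulgV mul1g.
Qed.

Lemma ak_eq m k : a_k 'I_m.+1 k = #|[set Om in Gsets 'I_m.+1 | #|Om| == k]|.
Proof.
rewrite /a_k (eq_imset (g := fun Om => [set Om])); last first.
  move=> Om; apply/setP => S; rewrite inE; apply/imsetP/eqP => [[y _ ->]|->].
    by rewrite /= conj_triv.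
  by exists 1%g; rewrite ?inE //= conj_triv.
by rewrite card_imset //; apply: set1_inj.
Qed.

Local Open Scope ring_scope.

Lemma sum_pick (c n : nat) (F : nat -> {poly int}) : (c < n)%N ->
  \sum_(1 <= k < n) (if c == k then F k else 0) = if (0 < c)%N then F c else 0.
Proof.
move=> cn; have [->|c0] := posnP c.
  by rewrite big1_seq // => k; rewrite mem_index_iota => /and3P[_ k0 _]; rewrite eq_sym (gtn_eqF k0).
rewrite (bigD1_seq c) ?mem_index_iota ?c0 ?iota_uniq //= eqxx big1 ?addr0 //.
by move=> k; rewrite eq_sym => /negPf ->.
Qed.

Lemma Psi_eq m : Psi 'I_m.+1 =
  \sum_(Om : {set 'I_m.+1} | Om \in Gsets 'I_m.+1) (if (0 < #|Om|)%N then 'X^#|Om| else 0).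
Proof.
rewrite /Psi card_ord.
have E k : (a_k 'I_m.+1 k)%:R *: 'X^k =
   \sum_(Om : {set 'I_m.+1} | Om \in Gsets 'I_m.+1) (if #|Om| == k then 'X^k else 0) :> {poly int}.
  rewrite ak_eq scaler_nat -sumr_const -big_mkcondr; apply: eq_bigl => Om; by rewrite inE.
under eq_bigr => k _ do rewrite E.
rewrite exchange_big /=; apply: eq_bigr => Om OG.
rewrite (eq_bigr (fun k => if #|Om| == k then 'X^#|Om| else 0)); last first.
  by move=> k _; case: eqP => // ->.
rewrite sum_pick //.
have : Om \proper [set: 'I_m.+1].
  rewrite properT; apply: contraNneq (_ : (1%g \notin Om)) => [->|]; first by rewrite inE.
  by move: OG; rewrite inE => /and3P[].
by move/proper_card; rewrite cardsT card_ord.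
Qed.

Definition Fp (d : nat) : {poly int} := (1 + 'X ^+ 2) ^+ (d.-1)./2 * (1 + 'X) ^+ (~~ odd d).

Lemma inner m e : (e %| m.+1)%N ->
  \sum_(Om : {set 'I_m.+1} | Pc m e Om) (if (0 < #|Om|)%N then 'X^#|Om| else 0)
  = Fp (dd m e) - 1.
Proof.
move=> eN; have := count_closed m e eN; rewrite -/(Fp _) => <-.
have P0 : Pc m e set0.
  apply/and3P; split; rewrite ?inE ?sub0set //.
  by apply/eqP/setP => x; rewrite !inE.
rewrite (bigD1 set0) // [X in _ = X - _](bigD1 set0) // cards0 expr0 /= add0r addrC addrK; apply: eq_bigr => Om /andP[_ O0].
by rewrite card_gt0 O0.
Qed.

Lemma Psi_mob m : Psi 'I_m.+1 =
  \sum_(e <- divisors m.+1) (mobius e)%:P * (Fp (dd m e) - 1).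
Proof.
rewrite Psi_eq big_mkcond /=.
set f := fun Om : {set 'I_m.+1} => if (0 < #|Om|)%N then 'X^#|Om| else 0 : {poly int}.
rewrite (eq_bigr (fun Om => \sum_(e <- divisors m.+1) (mobius e)%:P * (if Pc m e Om then f Om else 0))); last first.
  move=> Om _; rewrite inE /Pc.
  case: (boolP ((Om^-1 == Om)%g && (1%g \notin Om))) => [/andP[-> ->]|B].
    rewrite gen_gcd /=; have := gen_mob m Om => /(congr1 (fun x : int => x%:P)).
    rewrite rmorph_sum /= => E.
    rewrite andbT -/(f Om).     have -> : (if gcdS m Om == 1%N then f Om else 0) = ((gcdS m Om == 1%N)%:R : int)%:P * f Om.
      by case: ifP => _; rewrite ?mul1r ?mul0r.
    rewrite E mulr_suml; apply: eq_bigr => e _; rewrite polyCM -mulrA; congr (_ * _).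
    by case: ifP => _; rewrite ?mul1r ?mul0r ?mulr0 //= mulr1.
  have -> : [&& (Om^-1 == Om)%g, <<Om>>%g == [set: 'I_m.+1] & 1%g \notin Om] = false.
    by apply/negbTE; apply: contra B => /and3P[-> _ ->].
  rewrite big1_seq // => e _.
  have -> : [&& (Om^-1 == Om)%g, 1%g \notin Om & Om \subset Me m e] = false.
    by apply/negbTE; apply: contra B => /and3P[-> -> _].
  by rewrite mulr0.
rewrite exchange_big /=; apply: eq_big_seq => e; rewrite -dvdn_divisors // => eN.
by rewrite -big_distrr /= -big_mkcond /= inner.
Qed.

Lemma divn_divn_id N d : (0 < N)%N -> (d %| N)%N -> (N %/ (N %/ d))%N = d.
Proof.
move=> N0 dN; have d0 : (0 < d)%N by apply: dvdn_gt0 dN.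
have q0 : (0 < N %/ d)%N by rewrite divn_gt0 // dvdn_leq.
by rewrite -{1}(divnK dN) mulKn.
Qed.

Lemma div_reindex (R : nmodType) N (G : nat -> R) : (0 < N)%N ->
  \sum_(e <- divisors N) G e = \sum_(d <- divisors N) G (N %/ d)%N.
Proof.
move=> N0; rewrite -(big_map (fun d => N %/ d)%N xpredT); apply: perm_big.
apply: uniq_perm; rewrite ?divisors_uniq //.
  rewrite map_inj_in_uniq ?divisors_uniq // => x y.
  rewrite -!dvdn_divisors // => xN yN E.
  by rewrite -(divn_divn_id _ _ N0 xN) E divn_divn_id.
move=> e; apply/idP/mapP => [|[d]]; rewrite -dvdn_divisors //.
  move=> eN; exists (N %/ e)%N; last by rewrite divn_divn_id.
  by rewrite -dvdn_divisors // -{2}(divnK eN) dvdn_mulr.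
by move=> dN ->; rewrite -dvdn_divisors //; apply/dvdnP; exists d; rewrite mulnC divnK.
Qed.

Local Close Scope ring_scope.

Theorem corollary3p2 (n : nat) (hn : (0 < n)%N) :
  Psi 'I_n.-1.+1 =
    (\sum_(d <- divisors n)
       (mobius (n %/ d))%:P *
       (((1 + 'X ^+ 2) ^+ (d.-1)./2 * (1 + 'X) ^+ (~~ odd d) - 1)))%R
  /\ Eval 'I_n.-1.+1 = (Psi 'I_n.-1.+1).[1]%R
  /\ Eval 'I_n.-1.+1 =
    (\sum_(d <- divisors n) mobius (n %/ d) * ((2 ^ d./2)%:Z - 1))%R.
Proof.
case: n hn => // m _ /=.
have P : Psi 'I_m.+1 =
    (\sum_(d <- divisors m.+1)
       (mobius (m.+1 %/ d))%:P *
       (((1 + 'X ^+ 2) ^+ (d.-1)./2 * (1 + 'X) ^+ (~~ odd d) - 1)))%R.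
  rewrite Psi_mob (div_reindex _ _ _ (ltn0Sn m)); apply: eq_big_seq => d.
  by rewrite -dvdn_divisors // => dN; rewrite /dd divn_divn_id.
split => //; split => //.
rewrite /Eval P horner_sum; apply: eq_big_seq => d; rewrite -dvdn_divisors // => dN.
have d0 : (0 < d)%N by apply: dvdn_gt0 dN.
rewrite hornerM hornerC !(hornerE, horner_exp) /=; congr (_ * (_ - _))%R.
rewrite expr1n -exprD -[(1 + 1)%R]/(2%:R : int)%R -natrX natz; congr Posz.
congr (2 ^ _)%N; have := odd_double_half d; have := odd_double_half d.-1.
case: d d0 {dN} => // d _ /=; case: (odd d) => /=; lia.
Qed.
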